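(* Let $\mathcal X,\mathcal U$ be finite nonempty sets, $f:\mathcal X\times\mathcal U\to\mathcal X$ and $\ell,g:\mathcal X\to\mathbb R$. Let $V_{\mathrm A}^*(x)=\max_{\pi\in\Pi}\min_{\tau\in\mathbb N}g(\xi_x^\pi(\tau))$ and $\tilde\ell(x)=\min\{\ell(x),V_{\mathrm A}^*(x)\}$. Then for all $x\in\mathcal X$, $$\max_{\pi\in\Pi}\max_{\tau\in\mathbb N}\min\Big\{\tilde\ell(\xi_x^\pi(\tau)),\min_{\kappa\le\tau}g(\xi_x^\pi(\kappa))\Big\}=\max_{\mathbf u\in\mathbb U}\max_{\tau\in\mathbb N}\min\Big\{\tilde\ell(\xi_x^{\mathbf u}(\tau)),\min_{\kappa\le\tau}g(\xi_x^{\mathbf u}(\kappa))\Big\}.$$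
   Context: $\mathbb N=\{0,1,\dots\}$; $\Pi$ is the set of maps $\mathcal X\to\mathcal U$; $\mathbb U$ is the set of sequences $\mathbb N\to\mathcal U$. For $\pi\in\Pi$: $\xi_x^\pi(0)=x$, $\xi_x^\pi(t+1)=f(\xi_x^\pi(t),\pi(\xi_x^\pi(t)))$. For $\mathbf u\in\mathbb U$: $\xi_x^{\mathbf u}(0)=x$, $\xi_x^{\mathbf u}(t+1)=f(\xi_x^{\mathbf u}(t),\mathbf u(t))$. *)

(* Defs.v *)
From HB Require Import structures.
From mathcomp Require Import all_boot all_order all_algebra.
From mathcomp Require Import all_classical all_reals.
Set Implicit Arguments. Unset Strict Implicit. Unset Printing Implicit Defensive.
Import Order.TTheory GRing.Theory Num.Theory.
Local Open Scope ring_scope.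
Local Open Scope classical_set_scope.

Fixpoint traj_pol (X U : Type) (f : X -> U -> X) (pi : X -> U) (x : X) (t : nat) : X :=
  match t with
  | 0 => x
  | t'.+1 => let y := traj_pol f pi x t' in f y (pi y)
  end.

Fixpoint traj_seq (X U : Type) (f : X -> U -> X) (u : nat -> U) (x : X) (t : nat) : X :=
  match t with
  | 0 => x
  | t'.+1 => f (traj_seq f u x t') (u t')
  end.

Definition min_upto (X : Type) (R : realType) (g : X -> R) (xi : nat -> X) (tau : nat) : R :=
  \big[Num.min/g (xi 0%N)]_(k < tau.+1) g (xi k).

(* V_A^*(x) = max_pi min_tau g(xi_x^pi(tau)) (sup/inf; attained since all sets are finite). *)
Definition VA (X U : Type) (R : realType) (f : X -> U -> X) (g : X -> R) (x : X) : R :=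
  sup [set inf [set g (traj_pol f pi x t) | t in [set: nat]] | pi in [set: X -> U]].

Definition ltilde (X U : Type) (R : realType) (f : X -> U -> X) (l g : X -> R) (x : X) : R :=
  Num.min (l x) (VA f g x).

Definition reach_avoid_val (X U : Type) (R : realType) (f : X -> U -> X) (l g : X -> R)
  (xi : nat -> X) : R :=
  sup [set Num.min (ltilde f l g (xi t)) (min_upto g xi t) | t in [set: nat]].

(* Main.v *)
Require Import Defs.
From HB Require Import structures.
From mathcomp Require Import all_boot all_order all_algebra.
From mathcomp Require Import all_classical all_reals.
Import Order.TTheory GRing.Theory Num.Theory.
Local Open Scope ring_scope.
Local Open Scope classical_set_scope.
Set Implicit Arguments.

Section Aux.
Variables (X U : Type) (f : X -> U -> X).

Lemma pol_is_seq (pi : X -> U) x :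
  traj_pol f pi x = traj_seq f (fun t => pi (traj_pol f pi x t)) x.
Proof.
apply: funext => t; elim: t => //= t ->. by [].
Qed.
End Aux.

Section Comb.
Variables (X : eqType) (U : Type) (f : X -> U -> X) (u : nat -> U) (u0 : U) (x : X).
Let s := traj_seq f u x.

Fixpoint findl (z : X) (n : nat) : option nat :=
  match n with 0 => None | n'.+1 => if s n' == z then Some n' else findl z n' end.

Lemma findl_some z n j : findl z n = Some j -> (j < n)%N /\ s j = z.
Proof.
elim: n => //= n IH; case: eqP => [<- [<-]|_ /IH [h1 h2]]; split => //.
exact: ltnW.
Qed.

Lemma findl_ge z n m : (m < n)%N -> s m = z -> exists j, findl z n = Some j /\ (m <= j)%N.
Proof.
elim: n => //= n IH; rewrite ltnS leq_eqVlt => /orP [/eqP ->|lt] sm.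
  by rewrite sm eqxx; exists n.
case: eqP => _; first by exists n; split => //; exact: ltnW.
exact: IH.
Qed.

Variable t : nat.
Definition pis (z : X) : U := match findl z t with Some j => u j | None => u0 end.
Let p := traj_pol f pis x.

Lemma reach_inv k :
  (exists k', (k' <= k)%N /\ p k' = s t /\ forall i, (i <= k')%N -> exists j, (j <= t)%N /\ p i = s j)
  \/ (exists m, (k <= m)%N /\ (m < t)%N /\ p k = s m /\
        forall i, (i <= k)%N -> exists j, (j <= t)%N /\ p i = s j).
Proof.
elim: k => [|k [[k' [h1 [h2 h3]]]|[m [h1 [h2 [h3 h4]]]]]].
- case: (posnP t) => [t0|tp].
    left; exists 0%N; split => //; split; first by rewrite t0.
    by move=> i; rewrite leqn0 => /eqP ->; exists 0%N.
  right; exists 0%N; split => //; split => //; split => //.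
  by move=> i; rewrite leqn0 => /eqP ->; exists 0%N.
- by left; exists k'; split => //; exact: leqW.
- have [j [fj mj]] := @findl_ge (p k) t m h2 (esym h3).
  have [jt sj] := @findl_some (p k) t j fj.
  have pk1 : p k.+1 = s j.+1.
    change (f (p k) (pis (p k)) = f (s j) (u j)).
    by rewrite /pis fj sj.
  have hall : forall i, (i <= k.+1)%N -> exists j0, (j0 <= t)%N /\ p i = s j0.
    move=> i; rewrite leq_eqVlt => /orP [/eqP ->|]; last by rewrite ltnS; exact: h4.
    by exists j.+1.
  case: (ltngtP j.+1 t) => [lt|gt|eq].
  + right; exists j.+1; split; first by rewrite ltnS (leq_trans h1 mj).
    by split.
  + by move: gt; rewrite ltnS leqNgt jt.
  + left; exists k.+1; split => //; split => //; by rewrite pk1 eq.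
Qed.

Lemma reach : exists k, p k = s t /\ forall i, (i <= k)%N -> exists j, (j <= t)%N /\ p i = s j.
Proof.
case: (reach_inv t) => [[k' [_ [h2 h3]]]|[m [h1 [h2 _]]]].
  by exists k'.
by move: (leq_ltn_trans h1 h2); rewrite ltnn.
Qed.
End Comb.

Section Main.
Variables (R : realType) (X U : Type) (f : X -> U -> X) (l g : X -> R).

Lemma min_upto_le (xi : nat -> X) t k : (k <= t)%N -> min_upto g xi t <= g (xi k).
Proof.
move=> kt; rewrite /min_upto.
have := @bigmin_le _ R _ (g (xi 0%N)) (Ordinal (kt : (k < t.+1)%N)) (fun k : 'I_t.+1 => g (xi k)).
by [].
Qed.

Lemma val_le (xi : nat -> X) t :
  Num.min (ltilde f l g (xi t)) (min_upto g xi t) <= g (xi 0%N).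
Proof. by rewrite ge_min (@min_upto_le xi t 0 (leq0n t)) orbT. Qed.

Lemma inner_ub (xi : nat -> X) :
  ubound [set Num.min (ltilde f l g (xi t)) (min_upto g xi t) | t in [set: nat]] (g (xi 0%N)).
Proof. by move=> _ [t _ <-]; exact: val_le. Qed.

Lemma rav_le (xi : nat -> X) : reach_avoid_val f l g xi <= g (xi 0%N).
Proof.
apply: ge_sup; first by exists (Num.min (ltilde f l g (xi 0%N)) (min_upto g xi 0)); exists 0%N.
exact: inner_ub.
Qed.

Lemma rav_ge (xi : nat -> X) t :
  Num.min (ltilde f l g (xi t)) (min_upto g xi t) <= reach_avoid_val f l g xi.
Proof.
apply: ub_le_sup; first by exists (g (xi 0%N)); exact: inner_ub.
by exists t.
Qed.
End Main.

Theorem mainTheorem6 (R : realType) (X U : finType) (x0 : X) (u0 : U)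
  (f : X -> U -> X) (l g : X -> R) (x : X) :
  sup [set reach_avoid_val f l g (traj_pol f pi x) | pi in [set: X -> U]] =
  sup [set reach_avoid_val f l g (traj_seq f u x) | u in [set: nat -> U]].
Proof.
set A := [set _ | pi in _]; set B := [set _ | u in _].
have ubB : ubound B (g x) by move=> _ [u _ <-]; exact: rav_le.
have ubA : ubound A (g x) by move=> _ [pi _ <-]; exact: rav_le.
have neA : A !=set0 by exists (reach_avoid_val f l g (traj_pol f (fun=> u0) x)); exists (fun=> u0).
have neB : B !=set0 by exists (reach_avoid_val f l g (traj_seq f (fun=> u0) x)); exists (fun=> u0).
apply/eqP; rewrite eq_le; apply/andP; split.
- apply: ge_sup => // _ [pi _ <-].
  apply: ub_le_sup; first by exists (g x).
  exists (fun t => pi (traj_pol f pi x t)) => //.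
  by rewrite -pol_is_seq.
- apply: ge_sup => // _ [u _ <-].
  apply: ge_sup; first by exists (Num.min (ltilde f l g x) (min_upto g (traj_seq f u x) 0)); exists 0%N.
  move=> _ [t _ <-].
  have [k [pk hk]] := @reach X U f u u0 x t.
  set pi := @pis X U f u u0 x t in pk hk.
  have H2 : reach_avoid_val f l g (traj_pol f pi x) <= sup A.
    apply: ub_le_sup; first by exists (g x).
    by exists pi.
  apply: le_trans H2.
    apply: le_trans (@rav_ge R X U f l g (traj_pol f pi x) k).
    rewrite pk le_min; apply/andP; split; first by rewrite ge_min lexx.
    rewrite ge_min; apply/orP; right.
    apply: le_bigmin.
      exact: (@min_upto_le R X g (traj_seq f u x) t 0 (leq0n t)).
    move=> i _; have [j [jt ->]] := hk i (ltn_ord i).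
    exact: (@min_upto_le R X g (traj_seq f u x) t j jt).
Qed.
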